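(* Let $R=k[x_1,\dots,x_n]$, let $f_1,\dots,f_m\in R$, $\mathbf f=(f_1,\dots,f_m)$, and $I=\langle f_1,\dots,f_m\rangle$. Fix any term order on $R$ and any term order on the free module $R^m$, and run the algorithm AGC (described in the context) on the input $f_1^{[\mathbf e_1]},\dots,f_m^{[\mathbf e_m]}$, using a partial order $<$ on the current set $G$ for the generalized rewritable criterion. If the algorithm AGC terminates after finitely many steps and the partial order $<$ is admissible, then the set $G$ it returns is a labeled Gröbner basis for $I$.
   Context: Notation: a ''polynomial in $I$'' is a pair written $f^{[\mathbf u]}$ with $\mathbf u=(p_1,\dots,p_m)\in R^m$ and $f=\mathbf u\cdot\mathbf f=\sum p_if_i$; two such pairs are equal iff both components are equal. Operations: $f^{[\mathbf u]}+g^{[\mathbf v]}=(f+g)^{[\mathbf u+\mathbf v]}$ and $ct(f^{[\mathbf u]})=(ctf)^{[ct\mathbf u]}$ for $c\in k$, $t$ a power product. $\mathbf e_i$ is the $i$-th unit vector of $R^m$. $\mathrm{lpp}$ and $\mathrm{lc}$ denote leading power product and leading coefficient (in $R$ w.r.t. the term order on $R$, in $R^m$ w.r.t. the term order on $R^m$); both orders are denoted $\prec$; convention $\mathrm{lpp}(0)=0\prec$ every nonzero power product. The signature of $f^{[\mathbf u]}$ is $\mathrm{lpp}(\mathbf u)$. A module monomial $x^\alpha\mathbf e_i$ divides $x^\beta\mathbf e_j$ iff $i=j$ and $x^\alpha\mid x^\beta$. A polynomial $0^{[\mathbf u]}$ is called a syzygy polynomial. Critical pair: for $f^{[\mathbf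 u]},g^{[\mathbf v]}$ with $f,g\neq0$, let $t=\mathrm{lcm}(\mathrm{lpp}(f),\mathrm{lpp}(g))$, $t_f=t/\mathrm{lpp}(f)$, $t_g=t/\mathrm{lpp}(g)$; if $\mathrm{lpp}(t_f\mathbf u)\succeq\mathrm{lpp}(t_g\mathbf v)$, the 4-tuple $(t_f,f^{[\mathbf u]},t_g,g^{[\mathbf v]})$ is the critical pair of $f^{[\mathbf u]}$ and $g^{[\mathbf v]}$, and its S-polynomial is $t_f(f^{[\mathbf u]})-c\,t_g(g^{[\mathbf v]})$ with $c=\mathrm{lc}(f)/\mathrm{lc}(g)$. The critical pair is regular if $\mathrm{lpp}(t_f\mathbf u)\succ\mathrm{lpp}(t_g\mathbf v)$. Partial order: a relation $<$ on the current set $G$ that is irreflexive, transitive, and such that $a<b$ does not imply $b<a$; it is updated whenever elements are added to $G$. Generalized rewritable: for $f^{[\mathbf u]}\in B$ with $f\ne0$ and a power product $t$, $t(f^{[\mathbf u]})$ is gen-rewritable by $B$ if there exists $g^{[\mathbf v]}\in B$ with $\mathrm{lpp}(\mathbf v)\mid\mathrm{lpp}(t\mathbf u)$ and $g^{[\mathbf v]}<f^{[\mathbf u]}$. A critical pair $(t_f,f^{[\mathbf u]},t_g,g^{[\mathbf v]})$ is gen-rewritable by $B$ if $t_f(f^{[\mathbf u]})$ or $t_g(g^{[\mathbf v]})$ is. One-side reduction: $f^{[\mathbf u]}$ is reducible by $h^{[\mathbf w]}\in G$ ($f,h\ne 0$) if $\mathrm{lpp}(h)\mid\mathrm{lpp}(f)$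 and $\mathrm{lpp}(t\mathbf w)\prec\mathrm{lpp}(\mathbf u)$ where $t=\mathrm{lpp}(f)/\mathrm{lpp}(h)$; a one-step reduction replaces $f^{[\mathbf u]}$ by $f^{[\mathbf u]}-ct(h^{[\mathbf w]})$, $c=\mathrm{lc}(f)/\mathrm{lc}(h)$. ''$f^{[\mathbf u]}$ is reduced to $f'^{[\mathbf u']}$ by $G$'' means $f'^{[\mathbf u']}$ is obtained by finitely many one-step reductions and is not reducible by $G$. Algorithm AGC: set $G:=\{f_i^{[\mathbf e_i]}:1\le i\le m\}\cup\{0^{[f_j\mathbf e_i-f_i\mathbf e_j]}:1\le i<j\le m\}$ and CPairs := the set of critical pairs of elements of $G$. While CPairs is nonempty: pick any critical pair $(t_f,f^{[\mathbf u]},t_g,g^{[\mathbf v]})$ in CPairs and remove it; if it is regular and not gen-rewritable by $G$, reduce its S-polynomial by $G$ to $h^{[\mathbf w]}$, add to CPairs the critical pairs of $h^{[\mathbf w]}$ with elements of $G$, and set $G:=G\cup\{h^{[\mathbf w]}\}\cup\{0^{[h\mathbf e_i-f_i\mathbf w]}:1\le i\le m\}$ (updating $<$). Return $G$. Admissible: the partial order $<$ is admissible if whenever the algorithm reduces the S-polynomial of a critical pair $(t_f,f^{[\mathbf u]},t_g,g^{[\mathbf v]})$ of $G$ to $h^{[\mathbf w]}$, after updating $<$ for $G\cup\{h^{[\mathbf w]}\}$ one has $h^{[\mathbf w]}<f^{[\mathbf u]}$. Labeled Gröbner basis: a finite set $G$ of polynomials in $I$ such that for every $f^{[\mathbf u]}$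 in $I$ with $f\ne0$ there is $g^{[\mathbf v]}\in G$ with $\mathrm{lpp}(g)\mid\mathrm{lpp}(f)$ and $\mathrm{lpp}(t\mathbf v)\preceq\mathrm{lpp}(\mathbf u)$, where $t=\mathrm{lpp}(f)/\mathrm{lpp}(g)$. *)

(* Defs.v *)
From HB Require Import structures.
From mathcomp Require Import all_boot all_order all_algebra.
From mathcomp Require Import mpoly.

Set Implicit Arguments.
Unset Strict Implicit.
Unset Printing Implicit Defensive.

Import GRing.Theory.
Local Open Scope ring_scope.

Definition strict_total_order (T : eqType) (lt : rel T) : Prop :=
  [/\ irreflexive lt, transitive lt,
      (forall a b, a != b -> lt a b || lt b a)
    & well_founded (fun a b => lt a b)].

Definition term_order (n : nat) (lt : rel 'X_{1..n}) : Prop :=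
  strict_total_order lt /\
  (forall a b c : 'X_{1..n}, lt a b -> lt (c + a)%MM (c + b)%MM).

(* module monomials of R^m : x^a e_i  ~  (a, i) *)
Definition modmon (n m : nat) := ('X_{1..n} * 'I_m)%type.

(* term order on R^m (not required to be related to the order on R) *)
Definition module_term_order (n m : nat) (lt : rel (modmon n m)) : Prop :=
  strict_total_order lt /\
  (forall (a b : modmon n m) (c : 'X_{1..n}),
      lt a b -> lt ((c + a.1)%MM, a.2) ((c + b.1)%MM, b.2)).

Definition omax (T : Type) (lt : rel T) (s : seq T) : option T :=
  foldr (fun a o => match o with
                    | None => Some a
                    | Some b => Some (if lt a b then b else a)
                    end) None s.

(* comparison of (optional) leading terms: lpp(0) = None is below all *)
Definition olt (T : Type) (lt : rel T) (a b : option T) : bool :=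
  match a, b with
  | None, Some _ => true
  | Some x, Some y => lt x y
  | _, _ => false
  end.

Definition ole (T : eqType) (lt : rel T) (a b : option T) : bool :=
  (a == b) || olt lt a b.

Section AGC.

Variables (k : fieldType) (n m : nat).
Variable ltR : rel 'X_{1..n}.
Variable ltM : rel (modmon n m).
Variable F : 'I_m -> {mpoly k[n]}.

Definition poly := {mpoly k[n]}.
Definition vect := {ffun 'I_m -> {mpoly k[n]}}.

(* labeled polynomial f^[u] : pair (f, u) *)
Definition lpoly := (poly * vect)%type.

Definition dotF (u : vect) : poly := \sum_(i < m) u i * F i.

Definition in_I (p : lpoly) : Prop := p.1 = dotF p.2.

Definition lpp (f : poly) : option 'X_{1..n} := omax ltR (msupp f).
Definition lc (f : poly) : k :=
  match lpp f with Some a => f@_a | None => 0 end.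

Definition vsupp (u : vect) : seq (modmon n m) :=
  flatten [seq [seq (a, i) | a <- msupp (u i)] | i <- enum 'I_m].
Definition lppv (u : vect) : option (modmon n m) := omax ltM (vsupp u).

Definition sig (p : lpoly) := lppv p.2.

Definition pdiv (a b : option 'X_{1..n}) : bool :=
  match a, b with Some x, Some y => lem x y | _, _ => false end.
Definition mdiv (a b : option (modmon n m)) : bool :=
  match a, b with
  | Some x, Some y => (x.2 == y.2) && lem x.1 y.1
  | None, None => true
  | _, _ => false
  end.

Definition vscale (c : k) (t : 'X_{1..n}) (u : vect) : vect :=
  [ffun i => c *: ('X_[t] * u i)].
Definition lpscale (c : k) (t : 'X_{1..n}) (p : lpoly) : lpoly :=
  (c *: ('X_[t] * p.1), vscale c t p.2).
Definition lpmul (t : 'X_{1..n}) (p : lpoly) : lpoly := lpscale 1 t p.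
Definition lpsub (p q : lpoly) : lpoly :=
  (p.1 - q.1, [ffun i => p.2 i - q.2 i]).

Definition unitv (i : 'I_m) : vect := [ffun j => if j == i then 1 else 0].

(* power-product quotient b / a (a divides b) *)
Definition pquot (b a : 'X_{1..n}) : 'X_{1..n} := (b - a)%MM.

Definition cpair := ('X_{1..n} * lpoly * 'X_{1..n} * lpoly)%type.

Definition cp_tf (c : cpair) := c.1.1.1.
Definition cp_f (c : cpair) := c.1.1.2.
Definition cp_tg (c : cpair) := c.1.2.
Definition cp_g (c : cpair) := c.2.

Definition crit_pair (p q : lpoly) : option cpair :=
  match lpp p.1, lpp q.1 with
  | Some a, Some b =>
      let t := mlcm a b in
      let tp := pquot t a in
      let tq := pquot t b in
      if ole ltM (sig (lpmul tq q)) (sig (lpmul tp p))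
      then Some (tp, p, tq, q) else Some (tq, q, tp, p)
  | _, _ => None
  end.

Definition crit_pairs_with (p : lpoly) (B : seq lpoly) : seq cpair :=
  pmap (crit_pair p) B.

Definition regular (c : cpair) : bool :=
  olt ltM (sig (lpmul (cp_tg c) (cp_g c))) (sig (lpmul (cp_tf c) (cp_f c))).

Definition spoly (c : cpair) : lpoly :=
  lpsub (lpmul (cp_tf c) (cp_f c))
        (lpscale (lc (cp_f c).1 / lc (cp_g c).1) (cp_tg c) (cp_g c)).

Definition gen_rewritable (B : seq lpoly) (lt : lpoly -> lpoly -> Prop)
    (t : 'X_{1..n}) (p : lpoly) : Prop :=
  p \in B /\ p.1 != 0 /\
  exists2 g, g \in B & mdiv (sig g) (sig (lpmul t p)) /\ lt g p.

Definition cp_gen_rewritable (B : seq lpoly) (lt : lpoly -> lpoly -> Prop)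
    (c : cpair) : Prop :=
  gen_rewritable B lt (cp_tf c) (cp_f c) \/
  gen_rewritable B lt (cp_tg c) (cp_g c).

Definition reducible_by (p h : lpoly) : Prop :=
  p.1 != 0 /\ h.1 != 0 /\ pdiv (lpp h.1) (lpp p.1) /\
  exists a b, lpp h.1 = Some a /\ lpp p.1 = Some b /\
              olt ltM (sig (lpmul (pquot b a) h)) (sig p).

Definition red1 (G : seq lpoly) (p q : lpoly) : Prop :=
  exists2 h, h \in G & reducible_by p h /\
    exists a b, lpp h.1 = Some a /\ lpp p.1 = Some b /\
      q = lpsub p (lpscale (lc p.1 / lc h.1) (pquot b a) h).

Inductive red_star (G : seq lpoly) : lpoly -> lpoly -> Prop :=
| red_refl p : red_star G p p
| red_step p q r : red1 G p q -> red_star G q r -> red_star G p r.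

Definition reduced_to (G : seq lpoly) (p q : lpoly) : Prop :=
  red_star G p q /\ ~ (exists2 h, h \in G & reducible_by q h).

Definition porder_on (G : seq lpoly) (lt : lpoly -> lpoly -> Prop) : Prop :=
  (forall a, a \in G -> ~ lt a a) /\
  (forall a b c, a \in G -> b \in G -> c \in G -> lt a b -> lt b c -> lt a c).

Definition extends_on (G : seq lpoly) (lt lt' : lpoly -> lpoly -> Prop) : Prop :=
  forall a b, a \in G -> b \in G -> (lt' a b <-> lt a b).

Record state := State {
  st_G : seq lpoly;
  st_CP : seq cpair;
  st_lt : lpoly -> lpoly -> Prop }.

Definition G0 : seq lpoly :=
  [seq (F i, unitv i) | i <- enum 'I_m] ++
  [seq (0, [ffun l => F ij.2 * unitv ij.1 l - F ij.1 * unitv ij.2 l])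
     | ij <- [seq (i, j) | i <- enum 'I_m, j <- enum 'I_m] & (val ij.1 < val ij.2)%N].

Definition CP0 : seq cpair :=
  flatten [seq crit_pairs_with p G0 | p <- G0].

Definition syz_of (h : lpoly) : seq lpoly :=
  [seq (0, [ffun l => h.1 * unitv i l - F i * h.2 l]) | i <- enum 'I_m].

(* One pass through the while loop.  The event is [None] if the chosen
   pair is discarded, and [Some (f^[u], h^[w])] if the S-polynomial of the
   chosen pair (t_f, f^[u], t_g, g^[v]) was reduced to h^[w] and added. *)
Inductive agc_step : state -> option (lpoly * lpoly) -> state -> Prop :=
| agc_skip G CP lt c :
    c \in CP ->
    ~ (regular c /\ ~ cp_gen_rewritable G lt c) ->
    agc_step (State G CP lt) None (State G (filter (predC1 c) CP) lt)
| agc_add G CP lt c h lt' :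
    c \in CP ->
    regular c -> ~ cp_gen_rewritable G lt c ->
    reduced_to G (spoly c) h ->
    porder_on (G ++ h :: syz_of h) lt' ->
    extends_on G lt lt' ->
    agc_step (State G CP lt) (Some (cp_f c, h))
             (State (G ++ h :: syz_of h)
                    (filter (predC1 c) CP ++ crit_pairs_with h G) lt').

(* A terminating run of AGC with N passes through the loop:
   states s 0, ..., s N, events e 0, ..., e (N-1). *)
Definition agc_run (N : nat) (s : nat -> state)
    (e : nat -> option (lpoly * lpoly)) : Prop :=
  [/\ st_G (s 0) = G0, st_CP (s 0) = CP0,
      porder_on G0 (st_lt (s 0)),
      (forall i, i < N -> agc_step (s i) (e i) (s i.+1))
    & st_CP (s N) = [::]]%N.

Definition admissible_run (N : nat) (s : nat -> state)
    (e : nat -> option (lpoly * lpoly)) : Prop :=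
  forall i f h, (i < N)%N -> e i = Some (f, h) -> st_lt (s i.+1) h f.

Definition labeled_GB (G : seq lpoly) : Prop :=
  (forall g, g \in G -> in_I g) /\
  forall p : lpoly, in_I p -> p.1 != 0 ->
    exists2 g, g \in G &
      pdiv (lpp g.1) (lpp p.1) /\
      exists a b, lpp g.1 = Some a /\ lpp p.1 = Some b /\
        ole ltM (sig (lpmul (pquot b a) g)) (sig p).

End AGC.

(* Main.v *)
Require Import Defs.
From HB Require Import structures.
From mathcomp Require Import all_boot all_order all_algebra.
From mathcomp Require Import mpoly.
From Stdlib Require Import Classical.

Set Implicit Arguments.
Unset Strict Implicit.
Unset Printing Implicit Defensive.
Import GRing.Theory.
Local Open Scope ring_scope.

Section Omax.
Variables (T : eqType) (lt : rel T).
Hypothesis Hlt : strict_total_order lt.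
Let ltirr : irreflexive lt. Proof. by case: Hlt. Qed.
Let lttr : transitive lt. Proof. by case: Hlt. Qed.
Let lttot : forall a b, a != b -> lt a b || lt b a. Proof. by case: Hlt. Qed.

Definition is_lead (P : T -> Prop) x := P x /\ forall y, P y -> y = x \/ lt y x.

Lemma omax_None s : omax lt s = None -> s = [::].
Proof. by case: s => //= a s; case: (omax lt s). Qed.

Lemma omax_lead s x : omax lt s = Some x -> is_lead (fun y => y \in s) x.
Proof.
elim: s x => //= a s IH x.
case E: (omax lt s) => [b|] [<-].
  have [bs bm] := IH _ E.
  case: ifP => hab.
    split; first by rewrite inE bs orbT.
    move=> y; rewrite inE => /orP[/eqP->|ys]; [by right|exact: bm].
  split; first by rewrite inE eqxx.
  move=> y; rewrite inE => /orP[/eqP->|ys]; first by left.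
  have hba : (a == b) || lt b a.
    case: (eqVneq a b) => //= /lttot; by rewrite hab.
  case/orP: hba => [/eqP eab|hba].
    by subst; case: (bm y ys) => [->|]; [left|right].
  case: (bm y ys) => [->|hyb]; right => //; exact: lttr hyb hba.
rewrite (omax_None E); split; first by rewrite inE.
by move=> y; rewrite inE => /eqP->; left.
Qed.

Lemma lead_omax s x : is_lead (fun y => y \in s) x -> omax lt s = Some x.
Proof.
move=> [xs xm]; case E: (omax lt s) => [x'|]; last by rewrite (omax_None E) in xs.
have [x's x'm] := omax_lead E.
case: (xm _ x's) => [->//|h1]; case: (x'm _ xs) => [->//|h2].
by have := lttr h1 h2; rewrite ltirr.
Qed.

Lemma lead_uniq (P : T -> Prop) x y : is_lead P x -> is_lead P y -> x = y.
Proof.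
move=> [px mx] [py my]; case: (mx _ py) => [->//|h1]; case: (my _ px) => [->//|h2].
by have := lttr h1 h2; rewrite ltirr.
Qed.

Lemma omax_lt s x : (forall y, y \in s -> lt y x) -> olt lt (omax lt s) (Some x).
Proof.
case E: (omax lt s) => [z|] //= h.
by have [zs _] := omax_lead E; apply: h.
Qed.

Lemma omax_lt_inv s x : olt lt (omax lt s) (Some x) -> forall y, y \in s -> lt y x.
Proof.
case E: (omax lt s) => [z|] //= h y ys.
  by have [_ zm] := omax_lead E; case: (zm _ ys) => [->//|]; move/lttr; apply.
by rewrite (omax_None E) in ys.
Qed.

Lemma olt_trans a b c : olt lt a b -> olt lt b c -> olt lt a c.
Proof. by case: a; case: b => //; case: c => // x y z /=; apply: lttr. Qed.
Lemma ole_olt_trans (a b c : option T) : ole lt a b -> olt lt b c -> olt lt a c.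
Proof. by rewrite /ole => /orP[/eqP->//|]; apply: olt_trans. Qed.

End Omax.
Section OmaxSub.
Variables (T : eqType) (lt : rel T) (R : zmodType).
Hypothesis Hlt : strict_total_order lt.
Let ltirr : irreflexive lt. Proof. by case: Hlt. Qed.
Let lttr : transitive lt. Proof. by case: Hlt. Qed.
Let lttot : forall a b, a != b -> lt a b || lt b a. Proof. by case: Hlt. Qed.
Variables (su sv sd : seq T) (cu cv : T -> R).
Hypotheses (hu : forall y, (y \in su) = (cu y != 0))
  (hv : forall y, (y \in sv) = (cv y != 0))
  (hd : forall y, (y \in sd) = (cu y - cv y != 0)).

Lemma sd_sub y : y \in sd -> (y \in su) || (y \in sv).
Proof.
rewrite hd hu hv; case: (eqVneq (cu y) 0) => [->|//]; rewrite sub0r oppr_eq0 => ->.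
by rewrite orbT.
Qed.

Lemma lead_sub_lt x : omax lt su = Some x -> olt lt (omax lt sv) (Some x) ->
  omax lt sd = Some x.
Proof.
move=> Hu Hv; have [xu xm] := omax_lead Hlt Hu.
have vlt := omax_lt_inv Hlt Hv.
apply: (lead_omax Hlt); split.
  have cvx : cv x = 0.
    by apply/eqP; apply: contraT; rewrite -hv => /vlt; rewrite ltirr.
  by rewrite hd cvx subr0 -hu.
move=> y /sd_sub /orP[/xm//|/vlt]; by right.
Qed.

Lemma lead_sub_eq x : omax lt su = Some x -> omax lt sv = Some x -> cu x = cv x ->
  olt lt (omax lt sd) (Some x).
Proof.
move=> Hu Hv E; apply: (omax_lt Hlt) => y yd.
have [_ xmu] := omax_lead Hlt Hu.
have [_ xmv] := omax_lead Hlt Hv.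
have yx : y != x by apply: contraTneq yd => ->; rewrite hd E subrr eqxx.
case/orP: (sd_sub yd) => [/xmu|/xmv] [h|//]; by rewrite h eqxx in yx.
Qed.

Lemma lead_sub_ne B M : omax lt su = Some B -> omax lt sv = Some M -> B != M ->
  omax lt sd = Some (if lt B M then M else B).
Proof.
move=> Hu Hv BM.
case: ifP => hBM.
  have : olt lt (omax lt su) (Some M) by rewrite Hu.
  move=> H.
  (* swap roles: sd's coefficients are - (cv - cu) *)
  have Hu' := omax_lead Hlt Hu.
  have [Mv Mm] := omax_lead Hlt Hv.
  have ulM := omax_lt_inv Hlt H.
  apply: (lead_omax Hlt); split.
    have cuM : cu M = 0.
      by apply/eqP; apply: contraT; rewrite -hu => /ulM; rewrite ltirr.
    by rewrite hd cuM sub0r oppr_eq0 -hv.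
  move=> y /sd_sub /orP[/ulM|/Mm]; [by right|done].
have hMB : lt M B by move: (lttot BM); rewrite hBM.
have : olt lt (omax lt sv) (Some B) by rewrite Hv.
exact: lead_sub_lt.
Qed.

End OmaxSub.
Section Main.
Variables (k : fieldType) (n m : nat).
Variable ltR : rel 'X_{1..n}.
Variable ltM : rel (modmon n m).
Variable F : 'I_m -> {mpoly k[n]}.
Hypothesis HR : term_order ltR.
Hypothesis HM : module_term_order ltM.

Let HRs : strict_total_order ltR. Proof. by case: HR. Qed.
Let HMs : strict_total_order ltM. Proof. by case: HM. Qed.
Let Rirr : irreflexive ltR. Proof. by case: HRs. Qed.
Let Mirr : irreflexive ltM. Proof. by case: HMs. Qed.
Let Rtr : transitive ltR. Proof. by case: HRs. Qed.
Let Mtr : transitive ltM. Proof. by case: HMs. Qed.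
Let Rtot : forall a b, a != b -> ltR a b || ltR b a. Proof. by case: HRs. Qed.
Let Mtot : forall a b, a != b -> ltM a b || ltM b a. Proof. by case: HMs. Qed.
Let Rcomp : forall a b c : 'X_{1..n}, ltR a b -> ltR (c + a)%MM (c + b)%MM.
Proof. by case: HR. Qed.
Let Mcomp : forall (a b : modmon n m) (c : 'X_{1..n}),
      ltM a b -> ltM ((c + a.1)%MM, a.2) ((c + b.1)%MM, b.2).
Proof. by case: HM. Qed.

Local Notation poly := {mpoly k[n]}.
Local Notation vect := (vect k n m).
Local Notation lpoly := (lpoly k n m).
Local Notation lpp := (@Defs.lpp k n ltR).
Local Notation lppv := (@Defs.lppv k n m ltM).
Local Notation sig := (@Defs.sig k n m ltM).

Definition vcoef (u : vect) (x : modmon n m) := (u x.2)@_x.1.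

Lemma mem_vsupp u x : (x \in vsupp u) = (vcoef u x != 0).
Proof.
rewrite /vsupp /vcoef; apply/flattenP/idP.
  by case=> s /mapP [i _ ->] /mapP [a ha ->] /=; rewrite -mcoeff_msupp.
move=> h; exists [seq (a, x.2) | a <- msupp (u x.2)].
  by apply/mapP; exists x.2; rewrite ?mem_enum.
by apply/mapP; exists x.1; rewrite ?mcoeff_msupp //; case: x {h}.
Qed.

Lemma mcoeffXM t (p : poly) a : ('X_[t] * p)@_(t + a)%MM = p@_a.
Proof. by rewrite mulrC mcoeffMX. Qed.

Lemma msupp_XM_inv t (p : poly) b : b \in msupp ('X_[t] * p) ->
  exists2 a, b = (t + a)%MM & a \in msupp p.
Proof.
rewrite mulrC (perm_mem (msuppMX p t)) => /mapP [a ha ->]; by exists a.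
Qed.

Lemma msupp_nil0 : msupp (0 : poly) = [::].
Proof. by apply/eqP; rewrite msupp_eq0. Qed.

Lemma lpp0 : lpp 0 = None.
Proof. by rewrite /Defs.lpp msupp_nil0. Qed.

Lemma lpp_None (f : poly) : lpp f = None -> f = 0.
Proof. by move/omax_None; apply: msuppnil0. Qed.

Lemma lpp_Some (f : poly) a : lpp f = Some a -> f@_a != 0.
Proof. by move/(omax_lead HRs) => [+ _]; rewrite mcoeff_msupp. Qed.

Lemma lpp_Some_nz (f : poly) a : lpp f = Some a -> f != 0.
Proof. by move/lpp_Some; apply: contraNneq => ->; rewrite mcoeff0. Qed.

Lemma lpp_nz_Some (f : poly) : f != 0 -> exists a, lpp f = Some a.
Proof.
case E: (lpp f) => [a|]; first by exists a.
by rewrite (lpp_None E) eqxx.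
Qed.

Lemma lpp_XM c t (f : poly) : c != 0 ->
  lpp (c *: ('X_[t] * f)) = omap (fun a => (t + a)%MM) (lpp f).
Proof.
move=> cnz; case E: (lpp f) => [a|] /=.
  have [af am] := omax_lead HRs E.
  apply: (lead_omax HRs); split.
    by rewrite mcoeff_msupp mcoeffZ mcoeffXM mulf_neq0 // -mcoeff_msupp.
  move=> y; rewrite mcoeff_msupp mcoeffZ mulf_eq0 negb_or => /andP[_].
  rewrite -mcoeff_msupp => /msupp_XM_inv [z -> /am [->|]]; first by left.
  by right; apply: Rcomp.
by rewrite (lpp_None E) mulr0 scaler0 lpp0.
Qed.

Lemma lpp_sub_ne (f g : poly) B M : lpp f = Some B -> lpp g = Some M -> B != M ->
  lpp (f - g) = Some (if ltR B M then M else B).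
Proof.
move=> Hf Hg BM.
apply: (@lead_sub_ne _ _ _ HRs (msupp f) (msupp g) (msupp (f - g))
   (fun a => f@_a) (fun a => g@_a)) => //; move=> y; by rewrite mcoeff_msupp ?mcoeffB.
Qed.

Definition vsub (u v : vect) : vect := [ffun i => u i - v i].

Lemma lppv_sub_lt (u v : vect) x : lppv u = Some x -> olt ltM (lppv v) (Some x) ->
  lppv (vsub u v) = Some x.
Proof.
move=> Hu Hv; apply: (@lead_sub_lt _ _ _ HMs (vsupp u) (vsupp v) (vsupp (vsub u v))
   (vcoef u) (vcoef v)) => //;
  move=> y; by rewrite mem_vsupp // /vcoef ffunE mcoeffB.
Qed.

Lemma lppv_sub_eq (u v : vect) x : lppv u = Some x -> lppv v = Some x ->
  vcoef u x = vcoef v x -> olt ltM (lppv (vsub u v)) (Some x).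
Proof.
move=> Hu Hv E; apply: (@lead_sub_eq _ _ _ HMs (vsupp u) (vsupp v) (vsupp (vsub u v))
   (vcoef u) (vcoef v)) => //;
  move=> y; by rewrite mem_vsupp // /vcoef ffunE mcoeffB.
Qed.

Lemma lppv_None (u : vect) : lppv u = None -> u = 0.
Proof.
move/omax_None => E; apply/ffunP => i; rewrite ffunE; apply/mpolyP => a.
rewrite mcoeff0; apply/eqP; apply: contraT => h.
have : (a, i) \in vsupp u by rewrite mem_vsupp.
by rewrite E.
Qed.

Lemma lppv_Some (u : vect) x : lppv u = Some x -> vcoef u x != 0.
Proof. by move/(omax_lead HMs) => [+ _]; rewrite mem_vsupp. Qed.

Lemma vcoef_scale c t (u : vect) b i :
  vcoef (vscale c t u) ((t + b)%MM, i) = c * vcoef u (b, i).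
Proof. by rewrite /vcoef /vscale ffunE mcoeffZ mcoeffXM. Qed.

Lemma lppv_scale c t (u : vect) : c != 0 ->
  lppv (vscale c t u) = omap (fun x => ((t + x.1)%MM, x.2)) (lppv u).
Proof.
move=> cnz; case E: (lppv u) => [[a i]|] /=.
  have [af am] := omax_lead HMs E.
  apply: (lead_omax HMs); split.
    by rewrite mem_vsupp vcoef_scale mulf_neq0 // -mem_vsupp.
  move=> [y j]; rewrite mem_vsupp /vcoef /vscale ffunE /= mcoeffZ mulf_eq0 negb_or.
  case/andP=> _; rewrite -mcoeff_msupp => /msupp_XM_inv [z -> hz].
  have : (z, j) \in vsupp u by rewrite mem_vsupp /vcoef /= -mcoeff_msupp.
  case/am => [[-> ->]|h]; first by left.
  by right; apply: (Mcomp t h).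
have E' := omax_None E.
case E2: (lppv (vscale c t u)) => [[y j]|] //.
have [+ _] := omax_lead HMs E2.
rewrite mem_vsupp /vcoef /vscale ffunE /= mcoeffZ mulf_eq0 negb_or.
case/andP=> _; rewrite -mcoeff_msupp => /msupp_XM_inv [z _ hz].
have : (z, j) \in vsupp u by rewrite mem_vsupp /vcoef /= -mcoeff_msupp.
by rewrite E'.
Qed.

Lemma lppv_scale0 t (u : vect) : lppv (vscale 0 t u) = None.
Proof.
case E2: (lppv (vscale 0 t u)) => [y|] //.
by have := lppv_Some E2; rewrite /vcoef /vscale ffunE scale0r mcoeff0 eqxx.
Qed.

Lemma sig_lpmul t (p : lpoly) :
  sig (lpmul t p) = omap (fun x => ((t + x.1)%MM, x.2)) (sig p).
Proof. by rewrite /Defs.sig /lpmul /lpscale /= lppv_scale ?oner_eq0. Qed.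

Lemma sig_lpscale c t (p : lpoly) : c != 0 -> sig (lpscale c t p) = sig (lpmul t p).
Proof. by move=> cnz; rewrite sig_lpmul /Defs.sig /= lppv_scale. Qed.

Lemma sig_lpscale_lt c t (p : lpoly) X :
  olt ltM (sig (lpmul t p)) X -> olt ltM (sig (lpscale c t p)) X.
Proof.
case: (eqVneq c 0) => [->|cnz]; last by rewrite sig_lpscale.
rewrite /Defs.sig /= lppv_scale0; by case: X; case: (lppv _).
Qed.

Lemma sig_lpsub_lt (p q : lpoly) : olt ltM (sig q) (sig p) ->
  sig (lpsub p q) = sig p.
Proof.
rewrite /Defs.sig /lpsub /=; case E: (lppv p.2) => [x|]; last by case: (lppv q.2).
move=> h; exact: (lppv_sub_lt E h).
Qed.

Local Notation dotF := (@dotF k n m F).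
Local Notation in_I := (@in_I k n m F).

Lemma dotF_scale c t (u : vect) : dotF (vscale c t u) = c *: ('X_[t] * dotF u).
Proof.
rewrite /Defs.dotF mulr_sumr scaler_sumr; apply: eq_bigr => i _.
by rewrite ffunE -scalerAl mulrA.
Qed.

Lemma dotF_sub (u v : vect) : dotF [ffun i => u i - v i] = dotF u - dotF v.
Proof.
rewrite /Defs.dotF -sumrB; apply: eq_bigr => i _; by rewrite ffunE mulrBl.
Qed.

Lemma inI_lpscale c t (p : lpoly) : in_I p -> in_I (lpscale c t p).
Proof. by rewrite /Defs.in_I /= dotF_scale => ->. Qed.

Lemma inI_lpmul t (p : lpoly) : in_I p -> in_I (lpmul t p).
Proof. exact: inI_lpscale. Qed.

Lemma inI_lpsub (p q : lpoly) : in_I p -> in_I q -> in_I (lpsub p q).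
Proof. by rewrite /Defs.in_I /= dotF_sub => -> ->. Qed.

Lemma inI_sig (p : lpoly) : in_I p -> p.1 != 0 -> exists x, sig p = Some x.
Proof.
move=> hI; case E: (sig p) => [x|]; first by exists x.
move/lppv_None: E => E; rewrite hI E /Defs.dotF big1 ?eqxx // => i _.
by rewrite ffunE mul0r.
Qed.

Lemma sig_spoly (c : cpair k n m) : regular ltM c ->
  sig (spoly ltR c) = sig (lpmul (cp_tf c) (cp_f c)).
Proof. by move=> hr; rewrite /spoly sig_lpsub_lt //; apply: sig_lpscale_lt. Qed.

Lemma inI_spoly (c : cpair k n m) : in_I (cp_f c) -> in_I (cp_g c) ->
  in_I (spoly ltR c).
Proof. by move=> h1 h2; apply: inI_lpsub; [apply: inI_lpmul|apply: inI_lpscale]. Qed.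

Lemma red1_sig (G : seq lpoly) p q : red1 ltR ltM G p q -> sig q = sig p /\
  ((forall g, g \in G -> in_I g) -> in_I p -> in_I q).
Proof.
case=> h hG [[_ [_ [_ [a [b [ha [hb hlt]]]]]]] [a' [b' [ha' [hb' ->]]]]].
move: ha'; rewrite ha => -[<-]; move: hb'; rewrite hb => -[<-].
split; first by apply: sig_lpsub_lt; apply: sig_lpscale_lt.
by move=> GI pI; apply: inI_lpsub => //; apply: inI_lpscale; apply: GI.
Qed.

Lemma red_star_sig (G : seq lpoly) p q : red_star ltR ltM G p q -> sig q = sig p /\
  ((forall g, g \in G -> in_I g) -> in_I p -> in_I q).
Proof.
elim=> [//|p1 q1 r1 /red1_sig [s1 i1] _ [s2 i2]].
by split; [rewrite s2 s1|move=> GI pI; apply: i2 => //; apply: i1].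
Qed.

Lemma gen_in_G0 i : (F i, unitv k n i) \in G0 F.
Proof. by rewrite /G0 mem_cat map_f ?mem_enum. Qed.

Lemma sig_gen i : sig (F i, unitv k n i) = Some (0%MM, i).
Proof.
apply: (lead_omax HMs); split.
  by rewrite mem_vsupp /vcoef /unitv ffunE eqxx mcoeff1 eqxx oner_eq0.
move=> [a j]; rewrite mem_vsupp /vcoef /unitv ffunE /=.
case: ifP => [/eqP ->|_]; last by rewrite mcoeff0 eqxx.
rewrite mcoeff1; case: (a =P 0%MM) => [->|_]; first by left.
by rewrite eqxx.
Qed.

Lemma dotF_unitv i : dotF (unitv k n i) = F i.
Proof.
rewrite /Defs.dotF (bigD1 i) //= big1 ?addr0 => [|j /negbTE hj];
  by rewrite ffunE ?eqxx ?mul1r ?hj ?mul0r.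
Qed.

Lemma G0_inI g : g \in G0 F -> in_I g.
Proof.
rewrite /G0 mem_cat => /orP[/mapP [i _ ->]|].
  by rewrite /Defs.in_I /= dotF_unitv.
case/mapP => [[i j]] _ -> ; rewrite /Defs.in_I /=.
rewrite /Defs.dotF.
under eq_bigr => l _ do rewrite ffunE mulrBl -!mulrA.
rewrite sumrB -!mulr_sumr.
have E : forall a, \sum_(l < m) unitv k n a l * F l = F a.
  by move=> a; rewrite -dotF_unitv.
by rewrite !E mulrC subrr.
Qed.

Lemma syz_prop (h g : lpoly) : g \in syz_of F h -> g.1 = 0 /\ (in_I h -> in_I g).
Proof.
case/mapP => i _ -> /=; split => // hI; rewrite /Defs.in_I /= /Defs.dotF.
under eq_bigr => l _ do rewrite ffunE mulrBl -!mulrA.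
rewrite sumrB -!mulr_sumr.
have E : \sum_(l < m) unitv k n i l * F l = F i by rewrite -dotF_unitv.
have E2 : \sum_(l < m) h.2 l * F l = h.1 by rewrite hI.
by rewrite E E2 mulrC subrr.
Qed.

Local Notation state := (state k n m).
Local Notation cpair := (cpair k n m).
Local Notation crit_pair := (@crit_pair k n m ltR ltM).
Local Notation step := (@agc_step k n m ltR ltM F).

Lemma crit_pair_mem (p q : lpoly) c : crit_pair p q = Some c ->
  (cp_f c = p /\ cp_g c = q) \/ (cp_f c = q /\ cp_g c = p).
Proof.
rewrite /Defs.crit_pair; case: (lpp p.1) => // a; case: (lpp q.1) => // b.
by case: ifP => _ [<-]; [left|right].
Qed.

Definition Inv (st : state) :=
  [/\ (forall g, g \in st_G st -> in_I g), porder_on (st_G st) (st_lt st)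
    & (forall c, c \in st_CP st -> cp_f c \in st_G st /\ cp_g c \in st_G st)].

Lemma step_sub st ev st' : step st ev st' ->
  {subset st_G st <= st_G st'} /\
  (forall a b, a \in st_G st -> b \in st_G st -> (st_lt st' a b <-> st_lt st a b)).
Proof.
case=> /= [G CP lt c _ _|G CP lt c h lt' _ _ _ _ _ hext]; first by split.
by split => // x hx; rewrite mem_cat hx.
Qed.

Lemma mem_new (G S : seq lpoly) h x : x \in G ++ h :: S ->
  [\/ x \in G, x = h | x \in S].
Proof.
by rewrite mem_cat inE => /orP[->|/orP[/eqP->|->]]; [constructor 1|constructor 2|constructor 3].
Qed.

Lemma step_Inv st ev st' : step st ev st' -> Inv st -> Inv st'.
Proof.
case=> /= [G CP lt c _ _|G CP lt c h lt' cCP reg nrw red por ext] [GI po CPG].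
  split=> // c' /=; rewrite mem_filter => /andP[_]; exact: CPG.
have [fG gG] := CPG _ cCP.
have hI : in_I h.
  have [_ +] := red_star_sig red.1; apply => //; exact: inI_spoly (GI _ fG) (GI _ gG).
have sub : {subset G <= G ++ h :: syz_of F h} by move=> x hx; rewrite mem_cat hx.
split=> //=.
  move=> g /mem_new [/GI//|->//|hs].
  by have [_ ] := syz_prop hs; apply.
move=> c'; rewrite mem_cat mem_filter => /orP[/andP[_ /CPG [h1 h2]]|].
  by split; apply: sub.
rewrite mem_pmap => /mapP [g gG' /esym /crit_pair_mem].
have hin : h \in G ++ h :: syz_of F h by rewrite mem_cat inE eqxx orbT.
by case=> [][-> ->]; split => //; apply: sub.
Qed.

Lemma crit_pair_some (p q : lpoly) : p.1 != 0 -> q.1 != 0 ->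
  exists c, crit_pair p q = Some c.
Proof.
move=> /lpp_nz_Some [a ha] /lpp_nz_Some [b hb].
rewrite /Defs.crit_pair ha hb; by case: ifP => _; eexists.
Qed.

Lemma step_pairs st ev st' : step st ev st' -> forall x y,
  x \in st_G st' -> y \in st_G st' -> x.1 != 0 -> y.1 != 0 -> x != y ->
  (x \in st_G st /\ y \in st_G st) \/
  exists2 c, c \in st_CP st' & (crit_pair x y = Some c \/ crit_pair y x = Some c).
Proof.
case=> /= [G CP lt c _ _ x y hx hy|G CP lt c h lt' cCP reg nrw red por ext x y];
  first by left.
have hsyz : forall z, z \in syz_of F h -> z.1 = 0 by move=> z /syz_prop [].
move=> /mem_new [hx|ex|/hsyz->]; last by rewrite eqxx.
  move=> /mem_new [hy|ey|/hsyz->]; last by rewrite eqxx.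
  - by left.
  - move=> nx ny _; right; subst y.
    have [c' E] := crit_pair_some ny nx.
    exists c'; last by right.
    by rewrite mem_cat; apply/orP; right; rewrite mem_pmap -E map_f.
move=> /mem_new [hy|ey|/hsyz->]; last by rewrite eqxx.
- move=> nx ny _; right; subst x.
  have [c' E] := crit_pair_some nx ny.
  exists c'; last by left.
  by rewrite mem_cat; apply/orP; right; rewrite mem_pmap -E map_f.
- by subst; rewrite eqxx.
Qed.

Lemma step_proc st ev st' c : step st ev st' -> c \in st_CP st -> c \notin st_CP st' ->
  ~ (regular ltM c /\ ~ cp_gen_rewritable ltM (st_G st) (st_lt st) c) \/
  (regular ltM c /\ exists h, [/\ ev = Some (cp_f c, h),
      reduced_to ltR ltM (st_G st) (spoly ltR c) h & h \in st_G st']).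
Proof.
case=> /= [G CP lt c0 _ hskip|G CP lt c0 h lt' cCP reg nrw red por ext] hc.
  by rewrite mem_filter hc andbT negbK => /eqP ->; left.
rewrite mem_cat mem_filter hc andbT negb_or negbK => /andP[/eqP -> _].
right; split=> //; exists h; split=> //.
by rewrite mem_cat inE eqxx orbT.
Qed.
Section Run.
Variables (N : nat) (s : nat -> state) (e : nat -> option (lpoly * lpoly)).
Hypothesis Hrun : agc_run ltR ltM F N s e.
Hypothesis Hadm : admissible_run N s e.

Let Hstep : forall i, (i < N)%N -> step (s i) (e i) (s i.+1).
Proof. by case: Hrun. Qed.

Lemma CP0_mem c : c \in CP0 ltR ltM F -> cp_f c \in G0 F /\ cp_g c \in G0 F.
Proof.
case/flattenP => l /mapP [p hp ->]; rewrite mem_pmap => /mapP [g hg /esym].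
by case/crit_pair_mem => [][-> ->].
Qed.

Lemma run_Inv i : (i <= N)%N -> Inv (s i).
Proof.
elim: i => [_|i IH hi].
  case: Hrun => hG hCP hpo _ _; split; rewrite ?hG ?hCP //.
  - exact: G0_inI.
  - by move=> c /CP0_mem.
apply: step_Inv (Hstep hi) (IH (ltnW hi)).
Qed.

Lemma run_ext i j : (i <= j <= N)%N ->
  {subset st_G (s i) <= st_G (s j)} /\
  (forall a b, a \in st_G (s i) -> b \in st_G (s i) ->
     (st_lt (s j) a b <-> st_lt (s i) a b)).
Proof.
elim: j => [|j IH] /andP[hij hjN].
  by move: hij; rewrite leqn0 => /eqP ->; split.
case: (ltngtP i j.+1) hij => // [hij|<-] _; last by split.
have [S1 E1] := IH (introT andP (conj hij (ltnW hjN))).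
have [S2 E2] := step_sub (Hstep hjN).
split; first by move=> x /S1 /S2.
move=> a b ha hb; rewrite E2 ?E1 //; exact: S1.
Qed.

Lemma run_pairs j : (j <= N)%N -> forall x y,
  x \in st_G (s j) -> y \in st_G (s j) -> x.1 != 0 -> y.1 != 0 -> x != y ->
  exists i, exists2 c, (i <= j)%N /\ c \in st_CP (s i) &
    (crit_pair x y = Some c \/ crit_pair y x = Some c).
Proof.
elim: j => [_|j IH hj] x y hx hy nx ny nxy.
  case: Hrun => hG hCP _ _ _; rewrite hG in hx hy.
  have [c E] := crit_pair_some nx ny.
  exists 0%N, c; last by left.
  split=> //; rewrite hCP; apply/flattenP; exists (crit_pairs_with ltR ltM x (G0 F)).
    exact: map_f.
  by rewrite mem_pmap -E map_f.
case: (step_pairs (Hstep hj) hx hy nx ny nxy) => [[hx' hy']|[c hc E]].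
  have [i [c [hij hc] E]] := IH (ltnW hj) x y hx' hy' nx ny nxy.
  by exists i, c => //; split => //; apply: leqW.
by exists j.+1, c.
Qed.

Lemma run_proc i c : (i <= N)%N -> c \in st_CP (s i) ->
  exists j, [/\ (i <= j)%N, (j < N)%N, c \in st_CP (s j) & 
   ~ (regular ltM c /\ ~ cp_gen_rewritable ltM (st_G (s j)) (st_lt (s j)) c) \/
   (regular ltM c /\ exists h, [/\ e j = Some (cp_f c, h),
      reduced_to ltR ltM (st_G (s j)) (spoly ltR c) h & h \in st_G (s j.+1)])].
Proof.
move=> hi; have [d hd] : exists d, (i + d = N)%N by exists (N - i)%N; rewrite subnKC.
elim: d i hd {hi} => [|d IH] i hd hc.
  by move: hc; rewrite addn0 in hd; subst i; case: Hrun => _ _ _ _ ->.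
have hiN : (i < N)%N by rewrite -hd addnS ltnS leq_addr.
case: (boolP (c \in st_CP (s i.+1))) => hc'.
  have hd' : (i.+1 + d = N)%N by rewrite addSnnS.
  have [j [h1 h2 h3 h4]] := IH i.+1 hd' hc'.
  by exists j; split => //; apply: ltnW.
by exists i; split => //; apply: step_proc (Hstep hiN) hc hc'.
Qed.

Local Notation G := (st_G (s N)).
Local Notation L := (st_lt (s N)).

Let Mwf : well_founded (fun a b => ltM a b). Proof. by case: HMs. Qed.

Lemma G_inI g : g \in G -> in_I g.
Proof. by move=> hg; case: (run_Inv (leqnn N)) => GI _ _; apply: GI. Qed.

Lemma G_po : porder_on G L.
Proof. by case: (run_Inv (leqnn N)) => _ PO _. Qed.

Lemma gen_in_G i : (F i, unitv k n i) \in G.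
Proof.
have [S _] := run_ext (i:=0) (j:=N) (introT andP (conj (leq0n N) (leqnn N))).
apply: S; case: Hrun => -> _ _ _ _; exact: gen_in_G0.
Qed.

Lemma min_exists_l (P : pred lpoly) (l : seq lpoly) : {subset l <= G} ->
  (exists2 x, x \in l & P x) ->
  exists y, [/\ y \in l, P y & forall z, z \in l -> P z -> ~ L z y].
Proof.
have [Lirr Ltr] := G_po.
elim: l => [_ [x //]|a l IH] sub [x hx Px].
have subl : {subset l <= G} by move=> z hz; apply: sub; rewrite inE hz orbT.
have aG : a \in G by apply: sub; rewrite inE eqxx.
case: (boolP (has P l)) => hl.
  have [y [yl Py ym]] : exists y, [/\ y \in l, P y & forall z, z \in l -> P z -> ~ L z y].
    by apply: IH => //; case/hasP: hl => z zl Pz; exists z.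
  case: (boolP (P a)) => Pa; last first.
    exists y; split; rewrite ?inE ?yl ?orbT //.
    by move=> z; rewrite inE => /orP[/eqP->|]; [rewrite (negbTE Pa)|apply: ym].
  case: (classic (L a y)) => hay.
    exists a; split; rewrite ?inE ?eqxx //.
    move=> z; rewrite inE => /orP[/eqP->|zl Pz hza]; first by move=> _; apply: Lirr.
    by apply: (ym z zl Pz); apply: Ltr hza hay => //; apply: subl.
  exists y; split; rewrite ?inE ?yl ?orbT //.
  by move=> z; rewrite inE => /orP[/eqP->//|]; apply: ym.
have Pa : P a.
  move: hx; rewrite inE => /orP[/eqP<-//|xl].
  by move/hasPn: hl => /(_ x xl); rewrite Px.
exists a; split; rewrite ?inE ?eqxx //.
move=> z; rewrite inE => /orP[/eqP->|zl Pz]; first by move=> _; apply: Lirr.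
by move/hasPn: hl => /(_ z zl); rewrite Pz.
Qed.

Definition Min (T : modmon n m) (g : lpoly) :=
  [/\ g \in G, mdiv (sig g) (Some T) &
      forall g'', g'' \in G -> mdiv (sig g'') (Some T) -> ~ L g'' g].

Lemma min_exists T g0 : g0 \in G -> mdiv (sig g0) (Some T) -> exists g, Min T g.
Proof.
move=> g0G hd.
have [y [yG Py ym]] := @min_exists_l (fun x => mdiv (sig x) (Some T)) G
  (fun x h => h) (ex_intro2 _ _ g0 g0G hd).
by exists y; split.
Qed.

Lemma lem0 (a : 'X_{1..n}) : lem 0%MM a.
Proof. by apply/mnm_lepP => j; rewrite mnm0E. Qed.

Lemma min_exists_T T : exists g, Min T g.
Proof.
apply: (@min_exists T (F T.2, unitv k n T.2)); first exact: gen_in_G.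
by rewrite sig_gen /= eqxx lem0.
Qed.

Lemma mdiv_sig (g : lpoly) T : mdiv (sig g) (Some T) ->
  exists σ, [/\ sig g = Some σ, σ.2 = T.2 & lem σ.1 T.1].
Proof. by case: (sig g) => // σ /andP[/eqP h1 h2]; exists σ. Qed.

Lemma mdiv_shift u (x : modmon n m) w : mdiv u (Some x) ->
  mdiv u (Some ((w + x.1)%MM, x.2)).
Proof.
case: u => //= z /andP[-> h]; apply: lepm_trans h _; exact: lem_addl.
Qed.

Lemma pair_eta (T : modmon n m) : T = (T.1, T.2). Proof. by case: T. Qed.

Lemma sig_Some_lpmul (g : lpoly) t X : sig (lpmul t g) = Some X ->
  exists2 σ, sig g = Some σ & X = ((t + σ.1)%MM, σ.2).
Proof. by rewrite sig_lpmul; case: (sig g) => //= σ [<-]; exists σ. Qed.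

Definition Claim (T : modmon n m) := forall p : lpoly, in_I p -> p.1 != 0 ->
  sig p = Some T -> exists g, exists a, exists b,
  [/\ g \in G, lpp g.1 = Some a, lpp p.1 = Some b, lem a b &
      ole ltM (sig (lpmul (b - a)%MM g)) (Some T)].

Definition Irred (T : modmon n m) := forall g σ a, Min T g -> sig g = Some σ ->
  lpp g.1 = Some a -> forall g' a', g' \in G -> lpp g'.1 = Some a' ->
  lem a' ((T.1 - σ.1) + a)%MM ->
  ~ olt ltM (sig (lpmul ((T.1 - σ.1) + a - a')%MM g')) (Some T).

Lemma cancel_lemma (p g : lpoly) t T : in_I p -> in_I g -> sig p = Some T ->
  sig (lpmul t g) = Some T -> exists c, [/\ c != 0,
  in_I (lpsub p (lpscale c t g)) & olt ltM (sig (lpsub p (lpscale c t g))) (Some T)].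
Proof.
move=> pI gI hp hg.
have hq : lppv (vscale 1 t g.2) = Some T by [].
have nzp := lppv_Some hp; have nzq := lppv_Some hq.
set c := vcoef p.2 T / vcoef (vscale 1 t g.2) T.
have cnz : c != 0 by rewrite mulf_neq0 ?invr_eq0.
exists c; split => //; first by apply: inI_lpsub => //; apply: inI_lpscale.
apply: lppv_sub_eq => //.
  exact: (etrans (sig_lpscale t g cnz) hg).
have vc : vcoef (vscale c t g.2) T = c * vcoef (vscale 1 t g.2) T.
  by rewrite /vcoef /vscale !ffunE !mcoeffZ mul1r.
by rewrite vc /c divfK.
Qed.


Lemma msub_split (a Lc M : 'X_{1..n}) : lem a Lc -> lem Lc M ->
  (M - a)%MM = ((M - Lc) + (Lc - a))%MM.
Proof.
move=> /mnm_lepP h1 /mnm_lepP h2; apply/mnmP => j; rewrite !(mnmBE, mnmDE).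
by rewrite addnBA ?h1 // subnK ?h2.
Qed.

Lemma crit_contra T T' g g' σ σ' a b M :
  Min T g -> Min T' g' -> sig g = Some σ -> sig g' = Some σ' ->
  lpp g.1 = Some a -> lpp g'.1 = Some b -> lem a M -> lem b M ->
  T = ((M - a + σ.1)%MM, σ.2) -> T' = ((M - b + σ'.1)%MM, σ'.2) -> ltM T' T -> False.
Proof.
move=> hmin hmin' hs hs' ha hb aM bM ET ET' hlt.
have [gG gd gm] := hmin; have [g'G g'd g'm] := hmin'.
set Lc := mlcm a b.
have aL : lem a Lc := lem_mlcml a b.
have bL : lem b Lc := lem_mlcmr a b.
have LM : lem Lc M by rewrite lem_mlcm aM bM.
set w := (M - Lc)%MM.
set x : modmon n m := ((Lc - a + σ.1)%MM, σ.2).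
set y : modmon n m := ((Lc - b + σ'.1)%MM, σ'.2).
have hT : T = ((w + x.1)%MM, x.2) by rewrite ET /= (msub_split aL LM) addmA.
have hT' : T' = ((w + y.1)%MM, y.2) by rewrite ET' /= (msub_split bL LM) addmA.
have yx : ltM y x.
  case: (eqVneq y x) => [eyx|nyx].
    by move: hlt; rewrite hT hT' eyx Mirr.
  case/orP: (Mtot nyx) => // hxy.
  have := Mcomp w hxy; rewrite -hT -hT' => h.
  by have := Mtr hlt h; rewrite Mirr.
have sx : sig (lpmul (Lc - a) g) = Some x by rewrite sig_lpmul hs.
have sy : sig (lpmul (Lc - b) g') = Some y by rewrite sig_lpmul hs'.
have nz := lpp_Some_nz ha; have nz' := lpp_Some_nz hb.
have ngg : g != g'.
  apply/eqP => egg; subst g'; move: hs' hb; rewrite hs ha => -[es] -[eb].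
  have : y = x by rewrite /y /x -es -eb.
  by move=> exy; move: yx; rewrite exy Mirr.
have cc : crit_pair g g' = Some ((Lc - a)%MM, g, (Lc - b)%MM, g').
  rewrite /Defs.crit_pair ha hb /= /pquot -/Lc sy sx.
  by have -> : ole ltM (Some y) (Some x) by apply/orP; right.
have cc' : crit_pair g' g = Some ((Lc - a)%MM, g, (Lc - b)%MM, g').
  rewrite /Defs.crit_pair ha hb /= /pquot mlcmC -/Lc sy sx.
  have -> // : ole ltM (Some x) (Some y) = false.
  apply/negbTE/negP => /orP[/eqP/(congr1 (odflt x)) /= exy|/= hxy].
    by move: yx; rewrite exy Mirr.
  by have := Mtr hxy yx; rewrite Mirr.
have [i [c [hiN hc] Ec]] := run_pairs (leqnn N) gG g'G nz nz' ngg.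
have Ec' : c = ((Lc - a)%MM, g, (Lc - b)%MM, g') by case: Ec; rewrite ?cc ?cc' => -[].
subst c.
have [j [hij hjN hcj hcase]] := run_proc hiN hc.
have [Sj Ej] := run_ext (i:=j) (j:=N) (introT andP (conj (ltnW hjN) (leqnn N))).
have [Sj1 Ej1] := run_ext (i:=j.+1) (j:=N) (introT andP (conj hjN (leqnn N))).
have [Sjj _] := run_ext (i:=j) (j:=j.+1) (introT andP (conj (leqnSn j) hjN)).
have [_ _ CPj] := run_Inv (ltnW hjN).
have [gGj g'Gj] := CPj _ hcj.
have reg : regular ltM ((Lc - a)%MM, g, (Lc - b)%MM, g') by rewrite /regular /= sy sx.
have mdx : mdiv (Some x) (Some x) by rewrite /= eqxx lepm_refl.
case: hcase => [hskip|[_ [h [eh red hin]]]].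
  have rw : cp_gen_rewritable ltM (st_G (s j)) (st_lt (s j))
      ((Lc - a)%MM, g, (Lc - b)%MM, g').
    by apply: NNPP => nrw; apply: hskip.
  case: rw => [[_ [_ [g'' g''in [hd hl]]]]|[_ [_ [g'' g''in [hd hl]]]]].
    apply: (gm g''); first exact: Sj.
      by rewrite hT; apply: mdiv_shift; rewrite -sx.
    by apply/Ej.
  apply: (g'm g''); first exact: Sj.
    by rewrite hT'; apply: mdiv_shift; rewrite -sy.
  by apply/Ej.
have hl := Hadm hjN eh.
have [sh _] := red_star_sig red.1.
rewrite sig_spoly // /= sx in sh.
apply: (gm h); first exact: Sj1.
  by rewrite sh hT; apply: mdiv_shift.
apply/Ej1 => //; exact: Sjj.
Qed.

Lemma cover_r T (IHc : forall T', ltM T' T -> Claim T') (r : lpoly) :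
  in_I r -> r.1 != 0 -> olt ltM (sig r) (Some T) -> exists g, exists a, exists b,
  [/\ g \in G, lpp g.1 = Some a, lpp r.1 = Some b, lem a b &
      olt ltM (sig (lpmul (b - a)%MM g)) (Some T)].
Proof.
move=> rI rnz hlt; have [T'' hs] := inI_sig rI rnz; rewrite hs /= in hlt.
have [g [a [b [h1 h2 h3 h4 ho]]]] := IHc _ hlt r rI rnz hs.
exists g, a, b; split => //; exact: (ole_olt_trans HMs ho).
Qed.

Lemma sub_lemma T (IH : forall y, ltM y T -> Claim y /\ Irred y) T' :
  ltM T' T -> forall M g' a', g' \in G -> lpp g'.1 = Some a' -> lem a' M ->
  sig (lpmul (M - a')%MM g') = Some T' ->
  exists gt, exists σt, exists bt, exists Tt,
  [/\ Min Tt gt, sig gt = Some σt, lpp gt.1 = Some bt, lem bt M &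
      Tt = ((M - bt + σt.1)%MM, σt.2) /\ (Tt = T' \/ ltM Tt T')].
Proof.
elim/(well_founded_ind Mwf): T' => T' IH' hT'T M g' a' g'G ha' ha'M hs'.
have [σ' hσ' ET'] := sig_Some_lpmul hs'.
have hd : mdiv (sig g') (Some T') by rewrite hσ' ET' /= eqxx lem_addl.
have [gs hms] := min_exists g'G hd.
have [gsG hds _] := hms.
have [σs [hσs e2 hle]] := mdiv_sig hds.
have hsT : sig (lpmul (T'.1 - σs.1)%MM gs) = Some T'.
  by rewrite sig_lpmul hσs /= submK // e2 -pair_eta.
case: (classic (exists2 as_, lpp gs.1 = Some as_ & (T'.1 - σs.1 + as_)%MM = M))
  => [[as_ Es hM]|noearly].
  exists gs, σs, as_, T'; split => //; first by rewrite -hM lem_addl.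
  split; last by left.
  by rewrite -hM addmK submK // e2 -pair_eta.
have g'I := G_inI g'G.
have [c [cnz rI rlt]] := cancel_lemma (inI_lpmul (M - a') g'I) (G_inI gsG) hs' hsT.
have hp1 : lpp (lpmul (M - a') g').1 = Some M.
  by rewrite /lpmul /lpscale /= lpp_XM ?oner_eq0 // ha' /= submK.
have [br [hbr hcase]] : exists br,
    lpp ((lpmul (M - a') g').1 - c *: ('X_[T'.1 - σs.1] * gs.1)) = Some br /\
    (br = M \/ exists2 as_, lpp gs.1 = Some as_ & br = (T'.1 - σs.1 + as_)%MM).
  case Es: (lpp gs.1) => [as_|].
    have hM : M != (T'.1 - σs.1 + as_)%MM.
      by apply/eqP => hM; apply: noearly; exists as_.
    exists (if ltR M (T'.1 - σs.1 + as_)%MM then (T'.1 - σs.1 + as_)%MM else M).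
    split; first by apply: lpp_sub_ne; rewrite // lpp_XM // Es.
    by case: ifP => _; [right; exists as_|left].
  by exists M; rewrite (lpp_None Es) mulr0 scaler0 subr0 hp1; split => //; left.
have rnz : (lpsub (lpmul (M - a') g') (lpscale c (T'.1 - σs.1) gs)).1 != 0.
  exact: lpp_Some_nz hbr.
have IHc : forall T'', ltM T'' T' -> Claim T''.
  by move=> T'' h; apply: (IH T'' (Mtr h hT'T)).1.
have [g2 [a2 [b2 [g2G ha2 hb2 hle2 hlt2]]]] := cover_r IHc rI rnz rlt.
have := etrans (esym hb2) hbr => -[eb]; subst b2.
case: hcase => [ebr|[as_ Es ebr]].
  subst br.
  have g2nz := lpp_Some_nz ha2.
  have [σ2 hσ2] := inI_sig (G_inI g2G) g2nz.
  have hs3 : sig (lpmul (M - a2) g2) = Some ((M - a2 + σ2.1)%MM, σ2.2).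
    by rewrite sig_lpmul hσ2.
  rewrite hs3 /= in hlt2.
  have [gt [σt [bt [Tt [h1 h2 h3 h4 [h5 h6]]]]]] :=
    IH' _ hlt2 (Mtr hlt2 hT'T) M g2 a2 g2G ha2 hle2 hs3.
  exists gt, σt, bt, Tt; split => //; split => //; right.
  by case: h6 => [->//|h]; apply: Mtr h hlt2.
exfalso; have IrrT' := (IH T' hT'T).2.
apply: (IrrT' gs σs as_ hms hσs Es g2 a2 g2G ha2); rewrite -?ebr //.
Qed.

Lemma main_ind T : Claim T /\ Irred T.
Proof.
elim/(well_founded_ind Mwf): T => T IH.
have IrrT : Irred T.
  move=> g σ a hmin hσ ha g' a' g'G ha' hlem hlt.
  have g'I := G_inI g'G; have g'nz := lpp_Some_nz ha'.
  have [σ' hσ'] := inI_sig g'I g'nz.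
  have hs' : sig (lpmul (T.1 - σ.1 + a - a')%MM g') =
      Some (((T.1 - σ.1 + a - a') + σ'.1)%MM, σ'.2) by rewrite sig_lpmul hσ'.
  rewrite hs' /= in hlt.
  have [gt [σt [bt [Tt [hmt hst hbt hbM [hTt hTT']]]]]] :=
    sub_lemma IH hlt g'G ha' hlem hs'.
  have [_ hd _] := hmin; have [σ0 [hs0 e2 hle]] := mdiv_sig hd.
  move: hs0; rewrite hσ => -[es]; subst σ0.
  apply: (crit_contra hmin hmt hσ hst ha hbt _ hbM _ hTt _).
  - exact: lem_addl.
  - by rewrite addmK submK // e2 -pair_eta.
  - by case: hTT' => [->//|h]; apply: Mtr h hlt.
split=> // p pI pnz hsig.
have [g hmin] := min_exists_T T.
have [gG hd gm] := hmin.
have [σ [hσ e2 hle]] := mdiv_sig hd.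
have hsT : sig (lpmul (T.1 - σ.1)%MM g) = Some T.
  by rewrite sig_lpmul hσ /= submK // e2 -pair_eta.
have [c [cnz rI rlt]] := cancel_lemma pI (G_inI gG) hsig hsT.
have [B hB] := lpp_nz_Some pnz.
have IHc : forall T', ltM T' T -> Claim T' by move=> T' h; apply: (IH T' h).1.
case Eg: (lpp g.1) => [a|].
  case: (eqVneq B (T.1 - σ.1 + a)%MM) => hBa.
    exists g, a, B; split => //; first by rewrite hBa lem_addl.
    by rewrite hBa addmK hsT /ole eqxx.
  have hr1 : lpp (p.1 - c *: ('X_[T.1 - σ.1] * g.1)) =
      Some (if ltR B (T.1 - σ.1 + a)%MM then (T.1 - σ.1 + a)%MM else B).
    by apply: lpp_sub_ne; rewrite // lpp_XM // Eg.
  have rnz : (lpsub p (lpscale c (T.1 - σ.1) g)).1 != 0 by exact: lpp_Some_nz hr1.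
  have [g2 [a2 [b2 [g2G ha2 hb2 hle2 hlt2]]]] := cover_r IHc rI rnz rlt.
  have := etrans (esym hb2) hr1 => -[eb]; subst b2.
  case: ifP hle2 hlt2 => hBl hle2 hlt2.
    by exfalso; apply: (IrrT g σ a hmin hσ Eg g2 a2 g2G ha2).
  exists g2, a2, B; split => //; by rewrite /ole hlt2 orbT.
have hr1 : lpp (p.1 - c *: ('X_[T.1 - σ.1] * g.1)) = Some B.
  by rewrite (lpp_None Eg) mulr0 scaler0 subr0.
have rnz : (lpsub p (lpscale c (T.1 - σ.1) g)).1 != 0 by exact: lpp_Some_nz hr1.
have [g2 [a2 [b2 [g2G ha2 hb2 hle2 hlt2]]]] := cover_r IHc rI rnz rlt.
have := etrans (esym hb2) hr1 => -[eb]; subst b2.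
exists g2, a2, B; split => //; by rewrite /ole hlt2 orbT.
Qed.

Lemma gb : labeled_GB ltR ltM F G.
Proof.
split; first exact: G_inI.
move=> p pI pnz; have [T hT] := inI_sig pI pnz.
have [g [a [b [gG ha hb hab ho]]]] := (main_ind T).1 p pI pnz hT.
exists g => //; rewrite ha hb; split => //; exists a, b; split => //.
by rewrite hT.
Qed.

End Run.
End Main.

Theorem theorem3p1 (k : fieldType) (n m : nat)
    (ltR : rel 'X_{1..n}) (ltM : rel (modmon n m))
    (F : 'I_m -> {mpoly k[n]}) :
  term_order ltR -> module_term_order ltM ->
  forall (N : nat) (s : nat -> state k n m)
         (e : nat -> option (lpoly k n m * lpoly k n m)),
    agc_run ltR ltM F N s e ->
    admissible_run N s e ->
    labeled_GB ltR ltM F (st_G (s N)).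
Proof.
move=> HR HM N s e Hrun Hadm; exact: (gb HR HM Hrun Hadm).
Qed.
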